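(* Consider the data sharing game with participants $N=\{1,\dots,n\}$ and a server $0$ with budget $b_0\ge 0$, in which every participant inputs its true dataset, and let $w$ be the associated characteristic function $$w(S)=\sum_{i\in S} v_i(F(D_S),D_i)+b_0 \quad (\emptyset\neq S\subseteq N),\qquad w(\emptyset)=0 .$$ Suppose that the global model trained on all data performs better than the model trained on any coalition, in the sense that for every nonempty $S\subseteq N$ and every $i\in S$, $v_i(F(D),D_i)\ge v_i(F(D_S),D_i)$. Then the core $$\mathrm{Core}(N)=\Big\{(\pi_0,\pi_1,\dots,\pi_n)\in\mathbb{R}^{n+1}_{+}\ :\ \sum_{i\in N}\pi_i+\pi_0=w(N),\ \ \sum_{i\in S}\pi_i+\pi_0\ge w(S)\ \text{for all } S\subseteq N\Big\}$$ is nonempty.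
   Context: Each participant $i\in N$ holds a dataset $D_i$; $D=\cup_{i\in N}D_i$ and, for $S\subseteq N$, $D_S=\{D_i\}_{i\in S}$. $F$ is a federated learning algorithm mapping a collection of datasets to a (global) model, $A(\cdot)$ is an accuracy metric of a model, and $h_i(\cdot)=k_iA(\cdot)$ with constant $k_i>0$. The valuation of participant $i$ (with original dataset $D_i$) for a model $M$ is $v_i(M,D_i)=\mathbb{E}\big[\max\{h_i(M)-h_i(F(D_i)),0\}\big]$, where the expectation is over the randomness of training/evaluation; in particular $v_i\ge 0$. *)

(* Defs.v *)
From mathcomp Require Import all_boot all_order all_algebra.
Set Implicit Arguments. Unset Strict Implicit. Unset Printing Implicit Defensive.
Import Order.TTheory GRing.Theory Num.Theory.
Local Open Scope ring_scope.

(* Participants N = {1..n} are modelled by 'I_n; coalitions S ⊆ N by {set 'I_n}.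
   Model : the type of (global) models;  F S : the model F(D_S) trained on D_S;
   v i M : the valuation v_i(M, D_i) of participant i for model M. *)

Definition dsg_w (R : numDomainType) (n : nat) (Model : Type)
  (F : {set 'I_n} -> Model) (v : 'I_n -> Model -> R) (b0 : R)
  (S : {set 'I_n}) : R :=
  if S == set0 then 0 else \sum_(i in S) v i (F S) + b0.

Definition in_core (R : numDomainType) (n : nat) (Model : Type)
  (F : {set 'I_n} -> Model) (v : 'I_n -> Model -> R) (b0 : R)
  (pi0 : R) (pi : 'I_n -> R) : Prop :=
  [/\ 0 <= pi0, (forall i, 0 <= pi i),
      \sum_(i < n) pi i + pi0 = dsg_w F v b0 setT &
      forall S : {set 'I_n}, dsg_w F v b0 S <= \sum_(i in S) pi i + pi0].

(* Main.v *)
Require Import Defs.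
From mathcomp Require Import all_boot all_order all_algebra.
Import Order.TTheory GRing.Theory Num.Theory.
Local Open Scope ring_scope.

Theorem theorem2 (R : realFieldType) (n : nat) (Model : Type)
  (F : {set 'I_n} -> Model) (v : 'I_n -> Model -> R) (b0 : R)
  (hb0 : 0 <= b0)
  (hv : forall (i : 'I_n) (M : Model), 0 <= v i M)
  (hbest : forall S : {set 'I_n}, S != set0 ->
     forall i, i \in S -> v i (F S) <= v i (F setT)) :
  exists (pi0 : R) (pi : 'I_n -> R), in_core F v b0 pi0 pi.
Proof.
exists (if [set: 'I_n] == set0 then 0 else b0), (fun i => v i (F setT)).
split.
- by case: ifP.
- by move=> i; apply: hv.
- rewrite /dsg_w; case: ifP => hT.
    rewrite addr0 big1 // => i _.
    by move/eqP: hT => hT; have := in_setT i; rewrite hT inE.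
  by congr (_ + _); apply: eq_bigl => i; rewrite inE.
- move=> S; rewrite /dsg_w; case: ifP => hS.
    apply: addr_ge0; first by apply: sumr_ge0 => i _; apply: hv.
    by case: ifP.
  have hT : ([set: 'I_n] == set0) = false.
    apply/negbTE; apply: contraFN hS => /eqP hT; apply/eqP.
    by apply/setP => i; have := in_setT i; rewrite hT inE.
  rewrite hT lerD2r; apply: ler_sum => i hi; apply: hbest => //.
  by rewrite hS.
Qed.
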